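(* Let $$B= \begin{pmatrix} 1& 2& 2\\ 2&1& 2\\ 2&2& 3 \end{pmatrix}.$$ For every positive integer $n$, writing $B^n(3,4,5)^\top=(x,y,z)^\top$, the inradius $r_n$ of the triangle with side lengths $x,y,z$ is $$r_n=\frac{(3+2\sqrt{2})^{n+1}-(3-2\sqrt{2})^{n+1}}{4\sqrt{2}}.$$
   Context: Triples are regarded as row vectors and $\top$ denotes transpose. The triple $B^n(3,4,5)^\top$ is a primitive Pythagorean triple (positive integers $x,y,z$ with $x^2+y^2=z^2$), so the triangle is a right triangle with hypotenuse $z$. *)

(* Defs.v *)
From HB Require Import structures.
From mathcomp Require Import all_boot all_order all_algebra.
Set Implicit Arguments. Unset Strict Implicit. Unset Printing Implicit Defensive.
Import Order.TTheory GRing.Theory Num.Theory.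
Local Open Scope ring_scope.

Definition Bmat : 'M[int]_3 :=
  \matrix_(i < 3, j < 3)
    (if (i == 2%N :> nat) && (j == 2%N :> nat) then 3
     else if i == j then 1 else 2).

Definition v345 : 'cV[int]_3 :=
  \col_(i < 3) (if i == 0%N :> nat then 3 else if i == 1%N :> nat then 4 else 5).

Definition triple (n : nat) : 'cV[int]_3 := (Bmat ^+ n) *m v345.

Definition semiperimeter (R : rcfType) (a b c : R) : R := (a + b + c) / 2.
Definition heron_area (R : rcfType) (a b c : R) : R :=
  let s := semiperimeter a b c in Num.sqrt (s * (s - a) * (s - b) * (s - c)).
Definition inradius (R : rcfType) (a b c : R) : R :=
  heron_area a b c / semiperimeter a b c.

(* Main.v *)
Require Import Defs.
From HB Require Import structures.
From mathcomp Require Import all_boot all_order all_algebra.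
From mathcomp Require Import ring lra zify.
Import Order.TTheory GRing.Theory Num.Theory.
Local Open Scope ring_scope.

Lemma tripleS n : triple n.+1 = Bmat *m triple n.
Proof. by rewrite /triple exprS mulmxA. Qed.

Lemma trip_rec n :
  [/\ triple n.+1 0 0 = triple n 0 0 + 2 * triple n 1 0 + 2 * triple n 2 0,
      triple n.+1 1 0 = 2 * triple n 0 0 + triple n 1 0 + 2 * triple n 2 0 &
      triple n.+1 2 0 = 2 * triple n 0 0 + 2 * triple n 1 0 + 3 * triple n 2 0].
Proof.
rewrite tripleS; move: (triple n) => t.
rewrite !mxE !big_ord_recl !big_ord0 !mxE /=.
have -> : (ord0 : 'I_3) = 0 by apply/val_inj.
have -> : (lift ord0 ord0 : 'I_3) = 1 by apply/val_inj.
have -> : (lift ord0 (lift ord0 ord0) : 'I_3) = 2 by apply/val_inj.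
split; ring.
Qed.

Lemma trip0 : [/\ triple 0 0 0 = 3, triple 0 1 0 = 4 & triple 0 2 0 = 5].
Proof. by rewrite /triple expr0 mul1mx !mxE. Qed.

Lemma inr_right (R : rcfType) (X Y Z : R) : 0 < X -> 0 < Y -> 0 < Z ->
  X ^+ 2 + Y ^+ 2 = Z ^+ 2 -> inradius X Y Z = (X + Y - Z) / 2.
Proof.
move=> hx hy hz hp.
rewrite /inradius /heron_area /semiperimeter.
have -> : (X + Y + Z) / 2 * ((X + Y + Z) / 2 - X) * ((X + Y + Z) / 2 - Y) *
    ((X + Y + Z) / 2 - Z) = (X * Y / 2) ^+ 2.
  have e : Z ^+ 2 = X ^+ 2 + Y ^+ 2 by [].
  apply/eqP; rewrite -subr_eq0; apply/eqP.
  have -> : (X + Y + Z) / 2 * ((X + Y + Z) / 2 - X) * ((X + Y + Z) / 2 - Y) *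
    ((X + Y + Z) / 2 - Z) - (X * Y / 2) ^+ 2 =
    (Z^+2 - X^+2 - Y^+2) * (X^+2 + Y^+2 - Z^+2) / 16
    by field.
  by rewrite -hp; ring.
rewrite sqrtr_sqr ger0_norm; last by apply: divr_ge0 => //; apply: mulr_ge0; apply: ltW.
have hs : X + Y + Z != 0 by rewrite gt_eqF // !addr_gt0.
apply/eqP; rewrite -subr_eq0; apply/eqP.
have -> : X * Y / 2 / ((X + Y + Z) / 2) - (X + Y - Z) / 2 =
   (Z ^+ 2 - X ^+ 2 - Y ^+ 2) / (2 * (X + Y + Z)) by field.
by rewrite -hp; apply/eqP; rewrite mulf_eq0; apply/orP; left; apply/eqP; ring.
Qed.

Section F.
Variable R : rcfType.
Let s : R := Num.sqrt 2.
Definition fa k : R := ((3 + 2 * s) ^+ k.+1 - (3 - 2 * s) ^+ k.+1) / (4 * s).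

Lemma s2 : s ^+ 2 = 2.
Proof. by rewrite /s sqr_sqrtr // ler0n. Qed.
Lemma s_ne0 : s != 0.
Proof. by rewrite /s gt_eqF // sqrtr_gt0 ltr0n. Qed.

Lemma fa0 : fa 0 = 1.
Proof. rewrite /fa !expr1; have := s_ne0; move=> h; field; exact: h. Qed.
Lemma fa1 : fa 1 = 6.
Proof.
rewrite /fa; have := s_ne0 => h.
have e : ((3 + 2 * s) ^+ 2 - (3 - 2 * s) ^+ 2) = 24 * s by ring.
by rewrite e; field.
Qed.
Lemma faS k : fa k.+2 = 6 * fa k.+1 - fa k.
Proof.
rewrite /fa; have := s_ne0 => h.
have ha : (3 + 2 * s) ^+ 2 = 6 * (3 + 2 * s) - 1.
  by rewrite -[LHS]subr0 -(subrr (4 * s ^+ 2)) {2}s2; ring.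
have hb : (3 - 2 * s) ^+ 2 = 6 * (3 - 2 * s) - 1.
  by rewrite -[LHS]subr0 -(subrr (4 * s ^+ 2)) {2}s2; ring.
rewrite -[k.+3]addn2 -[k.+2]addn1 !exprD ha hb !expr1; field; exact: h.
Qed.

Lemma inv n :
  let x := triple n 0 0 in let y := triple n 1 0 in let z := triple n 2 0 in
  [/\ [&& 0 < x, 0 < y & 0 < z], x ^+ 2 + y ^+ 2 = z ^+ 2,
      (x%:~R + y%:~R - z%:~R : R) = 2 * fa n &
      (x%:~R + y%:~R + z%:~R : R) = 2 * fa n.+1].
Proof.
elim: n => [|n IH] /=.
  case: trip0 => -> -> ->; rewrite fa0 fa1; split => //; ring.
case: IH => /and3P[hx hy hz] hp hd hs.
case: (trip_rec n) => -> -> ->.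
set x := triple n 0 0 in hx hp hd hs *.
set y := triple n 1 0 in hy hp hd hs *.
set z := triple n 2 0 in hz hp hd hs *.
split.
- apply/and3P; split; lia.
- apply/eqP; rewrite -subr_eq0; apply/eqP.
  rewrite -(subrr (z ^+ 2)) -{1}hp; ring.
- rewrite !intrD !intrM; lra.
- rewrite faS !intrD !intrM; lra.
Qed.
End F.

Theorem mainTheorem4 (R : rcfType) (n : nat) : (0 < n)%N ->
  inradius ((triple n 0 0)%:~R : R) ((triple n 1 0)%:~R) ((triple n 2 0)%:~R)
  = ((3 + 2 * Num.sqrt 2) ^+ n.+1 - (3 - 2 * Num.sqrt 2) ^+ n.+1)
    / (4 * Num.sqrt 2).
Proof.
move=> _.
case: (inv R n) => /and3P[hx hy hz] hp hd _.
rewrite inr_right ?ltr0z //; last by rewrite -!rmorphXn -!intrD hp.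
rewrite hd /fa; have h := s_ne0 R; field; exact: h.
Qed.
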